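(* Let $G=(X,b,m,c)$ be a weighted graph, $p\in(1,\infty)$ and $o\in X$. Let $f\in D^p$ and let $(f_n)$ be a sequence in $D^p$. If $f_n\to f$ pointwise and $\limsup_{n\to\infty}\mathcal{E}_p(f_n)\le\mathcal{E}_p(f)$, then $\|f_n-f\|_{o,p}\to0$.
   Context: Weighted graph $G=(X,b,m,c)$: $X$ countably infinite; $b$ symmetric, nonnegative, zero on the diagonal, $\sum_yb(x,y)<\infty$; $m>0$; $c\colon X\to[0,\infty)$; $x\sim y$ iff $b(x,y)>0$; $X$ connected. $\mathcal{E}_p(f)=\frac12\sum_{x,y}b(x,y)|f(x)-f(y)|^p+\sum_xc(x)|f(x)|^p$, $D^p=\{f:\mathcal{E}_p(f)<\infty\}$, $\|f\|_{o,p}=(\mathcal{E}_p(f)+|f(o)|^p)^{1/p}$. *)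

(* Defs.v *)
From HB Require Import structures.
From mathcomp Require Import all_boot all_order all_algebra.
From mathcomp Require Import all_classical all_reals all_analysis.
From Stdlib Require Import Relations.
Set Implicit Arguments. Unset Strict Implicit. Unset Printing Implicit Defensive.
Import Order.TTheory GRing.Theory Num.Theory.
Local Open Scope classical_set_scope.
Local Open Scope ring_scope.

Definition weighted_graph (R : realType) (X : countType)
  (b : X -> X -> R) (m : X -> R) (c : X -> R) : Prop :=
  infinite_set [set: X] /\
  (forall x y, b x y = b y x) /\
  (forall x y, 0 <= b x y) /\
  (forall x, b x x = 0) /\
  (forall x, (\esum_(y in [set: X]) (b x y)%:E < +oo)%E) /\
  (forall x, 0 < m x) /\
  (forall x, 0 <= c x) /\
  (forall x y, clos_refl_trans X (fun u v => 0 < b u v) x y).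

Definition energy (R : realType) (X : countType) (b : X -> X -> R) (c : X -> R)
  (p : R) (f : X -> R) : \bar R :=
  ((2^-1)%:E * \esum_(xy in [set: X * X]) (b xy.1 xy.2 * `|f xy.1 - f xy.2| `^ p)%:E
   + \esum_(x in [set: X]) (c x * `|f x| `^ p)%:E)%E.

Definition Dp (R : realType) (X : countType) (b : X -> X -> R) (c : X -> R)
  (p : R) (f : X -> R) : Prop := (energy b c p f < +oo)%E.

Definition norm_op (R : realType) (X : countType) (b : X -> X -> R) (c : X -> R)
  (p : R) (o : X) (f : X -> R) : \bar R :=
  ((energy b c p f + (`|f o| `^ p)%:E) `^ p^-1)%E.

(* Main.v *)
Require Import Defs.
From HB Require Import structures.
From mathcomp Require Import all_boot all_order all_algebra.
From mathcomp Require Import all_classical all_reals all_analysis.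
From mathcomp Require Import ring lra.
Import Order.TTheory GRing.Theory Num.Theory numFieldNormedType.Exports.
Local Open Scope classical_set_scope.
Local Open Scope ring_scope.

Section generic.
Context {R : realType}.

Lemma powR_cvg_ge0 (y : nat -> R) (b p : R) : 0 < p ->
  (forall n, 0 <= y n) -> 0 <= b ->
  y n @[n --> \oo] --> b -> y n `^ p @[n --> \oo] --> b `^ p.
Proof.
move=> p0 y0 b0 yb.
have [bpos|b0'] := ltP 0 b.
  have hd : derivable (@powR R ^~ p) b (1:R).
    by apply: derivable_powR; rewrite in_itv /= bpos.
  move/derivable1_diffP: hd => hd; have hc := differentiable_continuous hd.
  exact: (cvg_comp _ _ yb hc).
have -> : b = 0 by apply/le_anti; rewrite b0' b0.
rewrite powR0 ?gt_eqF//.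
apply/cvgrPdist_lt => e e0.
have d0 : 0 < e `^ p^-1 by rewrite powR_gt0.
move/cvgrPdist_lt : yb => /(_ _ d0).
have -> : b = 0 by apply/le_anti; rewrite b0' b0.
apply: filterS => n; rewrite sub0r normrN ger0_norm // => hn.
rewrite sub0r normrN ger0_norm ?powR_ge0 //.
have -> : e = (e `^ p^-1) `^ p.
  by rewrite -powRrM mulVf ?gt_eqF // powRr1 // ltW.
by apply: gt0_ltr_powR => //; rewrite nnegrE ?powR_ge0.
Qed.

Lemma powR_cvg_abs (x : nat -> R) (a p : R) : 0 < p ->
  x n @[n --> \oo] --> a -> `|x n| `^ p @[n --> \oo] --> `|a| `^ p.
Proof.
move=> p0 xa; apply: powR_cvg_ge0 => //.
exact: cvg_norm.
Qed.

Lemma powR_sub_le (x y p : R) : 1 <= p ->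
  `|x - y| `^ p <= 2 `^ (p - 1) * (`|x| `^ p + `|y| `^ p).
Proof.
move=> p1.
have p0 : 0 < p by rewrite (lt_le_trans _ p1).
have conv (a c : R) : `| 2^-1 * a + 2^-1 * c | `^ p <=
   2^-1 * `| a | `^ p + 2^-1 * `| c | `^ p.
  rewrite (@le_trans _ _ ((2^-1 * `| a | + 2^-1 * `| c |) `^ p))//.
    rewrite ge0_ler_powR ?nnegrE ?(le_trans _ p1)//.
    by rewrite (le_trans (ler_normD _ _))// 2!normrM ger0_norm.
  rewrite {2 4}(_ : 2^-1 = 1 - 2^-1); last by rewrite {2}(splitr 1) div1r addrK.
  by apply: (convex_powR p1 (Itv01 _ _)) => //=;
    rewrite ?inE/= ?in_itv/= ?normr_ge0// ?invr_ge0// invf_le1 ?ler1n.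
have h := conv (2 * x) (2 * - y).
have e : 2 `^ (p - 1) = 2^-1 * 2 `^ p :> R.
  rewrite powRD ?pnatr_eq0 ?implybT // mulrC; congr (_ * _).
  by rewrite powR_inv1.
move: h; rewrite !mulrA mulVf// !mul1r !normrM normrN (@ger0_norm _ 2)// !powRM//.
move=> /le_trans; apply; rewrite e.
by rewrite le_eqVlt; apply/orP; left; apply/eqP; ring.
Qed.

Lemma cvg_sum_seq (T : Type) (s : seq T) (F : nat -> T -> R) (G : T -> R) :
  (forall t, F n t @[n --> \oo] --> G t) ->
  \sum_(t <- s) F n t @[n --> \oo] --> \sum_(t <- s) G t.
Proof.
move=> FG; elim: s => [|t s IH].
  rewrite big_nil; under eq_cvg do rewrite big_nil; exact: cvg_cst.
rewrite big_cons; under eq_cvg do rewrite big_cons.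
exact: cvgD.
Qed.

End generic.

Section esumpart.
Context {R : realType} {T : choiceType}.

Definition Sw (w v : T -> R) (p : R) : \bar R :=
  \esum_(t in [set: T]) (w t * `|v t| `^ p)%:E.

Lemma esumZ (k : R) (a : T -> \bar R) : 0 <= k -> (forall t, (0 <= a t)%E) ->
  \esum_(t in [set: T]) (k%:E * a t)%E = (k%:E * \esum_(t in [set: T]) a t)%E.
Proof.
move=> k0 a0; rewrite /esum -ereal_supZl //.
  congr ereal_sup; rewrite image_comp; apply: eq_imagel => A _ /=.
  by rewrite ge0_mule_fsumr.
apply/set0P; exists (\sum_(i \in set0) a i)%E.
by exists set0 => //; exact: fsets_set0.
Qed.

Lemma ge0_fin (x : \bar R) : (0 <= x)%E -> (x < +oo)%E -> x = (fine x)%:E.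
Proof. by move=> x0 xoo; rewrite fineK // ge0_fin_numE. Qed.

Lemma Sw_ge0 w v p : (forall t, 0 <= w t) -> (0 <= Sw w v p)%E.
Proof.
by move=> w0; apply: esum_ge0 => t _; rewrite lee_fin mulr_ge0 // powR_ge0.
Qed.

Lemma addoo (x y : \bar R) : (0 <= x)%E -> (0 <= y)%E -> (x + y < +oo)%E ->
  (x < +oo)%E /\ (y < +oo)%E.
Proof.
case: x => [x| |]; case: y => [y| |] //= _ _; rewrite ?ltry ?ltxx //.
Qed.

Lemma halfoo (x : \bar R) : (0 <= x)%E -> ((2^-1)%:E * x < +oo)%E -> (x < +oo)%E.
Proof.
case: x => [x| |] //= _; rewrite ?ltry // muleC gt0_mulye ?ltxx // lte_fin invr_gt0 //.
Qed.

Lemma key (w u : T -> R) (us : nat -> T -> R) (p : R) :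
  1 <= p -> (forall t, 0 <= w t) -> (Sw w u p < +oo)%E ->
  (forall n, (Sw w (us n) p < +oo)%E) ->
  (forall t, us n t @[n --> \oo] --> u t) ->
  forall e : R, 0 < e -> \forall n \near \oo,
    (Sw w (fun t => (us n t - u t)%R) p < +oo)%E /\
    fine (Sw w (fun t => (us n t - u t)%R) p) <=
      2 `^ (p - 1) * (fine (Sw w (us n) p) - fine (Sw w u p)) + e.
Proof.
move=> p1 w0 Su Sus cvu e e0.
have p0 : 0 < p by rewrite (lt_le_trans _ p1).
have K0 : 0 <= 2 `^ (p - 1) :> R by exact: powR_ge0.
pose h n t := w t * (2 `^ (p - 1) * (`|us n t| `^ p + `|u t| `^ p)
                      - `|us n t - u t| `^ p).
have h0 n t : 0 <= h n t.
  by rewrite /h mulr_ge0 // subr_ge0 powR_sub_le.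
have iden n : (Sw w (fun t => (us n t - u t)%R) p + \esum_(t in [set: T]) (h n t)%:E
   = (2 `^ (p - 1))%:E * (Sw w (us n) p + Sw w u p))%E.
  rewrite /Sw -esumD; last 2 first.
  - by move=> t _; rewrite lee_fin mulr_ge0 ?powR_ge0.
  - by move=> t _; rewrite lee_fin.
  rewrite -esumD; last 2 first.
  - by move=> t _; rewrite lee_fin mulr_ge0 ?powR_ge0.
  - by move=> t _; rewrite lee_fin mulr_ge0 ?powR_ge0.
  rewrite -esumZ //; last by move=> t; rewrite adde_ge0 // lee_fin mulr_ge0 ?powR_ge0.
  apply: eq_esum => t _; rewrite -!EFinD -EFinM; congr EFin; rewrite /h; ring.
pose s := fine (Sw w u p).
have Sue : Sw w u p = s%:E by apply: ge0_fin => //; exact: Sw_ge0.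
pose d := e / (2 * 2 `^ (p - 1) + 1).
have L0 : 0 < 2 * 2 `^ (p - 1) + 1 :> R by rewrite ltr_wpDl // mulr_ge0.
have d0 : 0 < d by rewrite divr_gt0.
have dE : (2 * 2 `^ (p - 1) + 1) * d = e by rewrite /d mulrC divfK // gt_eqF.
have : ((s - d)%:E < Sw w u p)%E by rewrite Sue lte_fin ltrBlDr ltrDl.
rewrite {1}/Sw /esum => /ereal_sup_gt [y [A [finA _] <-]].
rewrite fsumEFin // lte_fin => sAd.
have cvh : \sum_(t \in A) h n t @[n --> \oo] -->
    \sum_(t \in A) (2 * 2 `^ (p - 1) * (w t * `|u t| `^ p)).
  rewrite fsbig_finite //; under eq_cvg do rewrite fsbig_finite //.
  apply: cvg_sum_seq => t.
  have -> : 2 * 2 `^ (p - 1) * (w t * `|u t| `^ p) =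
     w t * (2 `^ (p - 1) * (`|u t| `^ p + `|u t| `^ p) - `|u t - u t| `^ p).
    by rewrite subrr normr0 powR0 ?gt_eqF // subr0; ring.
  apply: cvgM; first exact: cvg_cst.
  apply: cvgB.
    apply: cvgM; first exact: cvg_cst.
    by apply: cvgD; [exact: powR_cvg_abs | exact: cvg_cst].
  by apply: powR_cvg_abs => //; apply: cvgB => //; exact: cvg_cst.
move/cvgrPdist_lt : cvh => /(_ _ d0).
apply: filterS => n hn.
have Hn := iden n.
pose a := fine (Sw w (us n) p).
have Sae : Sw w (us n) p = a%:E by apply: ge0_fin => //; exact: Sw_ge0.
rewrite Sae Sue -EFinD -EFinM in Hn.
have [dfin Hfin] : (Sw w (fun t => (us n t - u t)%R) p < +oo)%E /\
   (\esum_(t in [set: T]) (h n t)%:E < +oo)%E.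
  apply: addoo; [exact: Sw_ge0 | by apply: esum_ge0 => t _; rewrite lee_fin | ].
  by rewrite Hn ltry.
split => //.
have hge : ((\sum_(t \in A) h n t)%:E <= \esum_(t in [set: T]) (h n t)%:E)%E.
  by apply: esum_ge; exists A => //; rewrite fsumEFin.
move: Hn hge.
have He0 : (0 <= \esum_(t in [set: T]) (h n t)%:E)%E.
  by apply: esum_ge0 => t _; rewrite lee_fin.
rewrite (ge0_fin _ He0 Hfin) (ge0_fin _ (Sw_ge0 _ _ _ w0) dfin) /=.
move=> Hn2 hge2.
rewrite -EFinD in Hn2; have Hn3 := EFin_inj Hn2; rewrite lee_fin in hge2.
rewrite -/a -/s.
have hlt : \sum_(t \in A) (2 * 2 `^ (p - 1) * (w t * `|u t| `^ p)) - d
    < \sum_(t \in A) h n t.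
  by move: hn; rewrite ltr_distlC => /andP[].
rewrite -mulr_fsumr in hlt.
have hL : 2 * 2 `^ (p - 1) * (s - d) <=
    2 * 2 `^ (p - 1) * \sum_(t \in A) (w t * `|u t| `^ p).
  by rewrite ler_wpM2l ?mulr_ge0 // ltW.
lra.
Qed.

End esumpart.

Theorem lemma2p4 (R : realType) (X : countType)
  (b : X -> X -> R) (m : X -> R) (c : X -> R)
  (p : R) (o : X) (f : X -> R) (fs : nat -> X -> R) :
  weighted_graph b m c -> 1 < p ->
  Dp b c p f -> (forall n, Dp b c p (fs n)) ->
  (forall x, fs n x @[n --> \oo] --> f x) ->
  (limn_esup (fun n => energy b c p (fs n)) <= energy b c p f)%E ->
  norm_op b c p o (fs n - f) @[n --> \oo] --> 0%E.
Proof.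
move=> [infX [_ [b0 [_ [_ [_ [c0 _]]]]]]] p1 Df Dfs cvf hsup.
have p1' : 1 <= p by exact: ltW.
have p0 : 0 < p by rewrite (lt_le_trans _ p1').
pose w1 := fun xy : X * X => b xy.1 xy.2.
pose V1 := fun (g : X -> R) (xy : X * X) => g xy.1 - g xy.2.
have w10 : forall xy, 0 <= w1 xy by move=> xy; exact: b0.
have eE g : energy b c p g =
    ((2^-1)%:E * (Sw w1 (V1 g) p + Sw c g p))%E.
  reflexivity.
have pieces g : Dp b c p g ->
   (Sw w1 (V1 g) p < +oo)%E /\ (Sw c g p < +oo)%E.
  rewrite /Dp eE => h; apply: addoo; [exact: Sw_ge0 | exact: Sw_ge0 |].
  by apply: halfoo => //; rewrite adde_ge0 // Sw_ge0.
have Efin g : Dp b c p g ->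
   energy b c p g = (2^-1 * (fine (Sw w1 (V1 g) p) + fine (Sw c g p)))%:E.
  move=> /pieces [h1 h2]; rewrite eE (ge0_fin _ (Sw_ge0 _ _ _ w10) h1).
  by rewrite (ge0_fin _ (Sw_ge0 _ _ _ c0) h2) /= -EFinD -EFinM.
have [A1f A2f] := pieces _ Df.
set K := 2 `^ (p - 1).
have K0 : 0 <= K by exact: powR_ge0.
set ee := 2^-1 * (fine (Sw w1 (V1 f) p) + fine (Sw c f p)).
have claim : forall e : R, 0 < e -> \forall n \near \oo,
    exists x : R, energy b c p (fs n - f) = x%:E /\ 0 <= x /\ x < e.
  move=> e e0.
  pose e' := e / (K + 2).
  have K2 : 0 < K + 2 by rewrite ltr_wpDl.
  have e'0 : 0 < e' by rewrite divr_gt0.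
  have e'E : (K + 2) * e' = e by rewrite /e' mulrC divfK // gt_eqF.
  have H1 := @key R (X * X)%type w1 (V1 f) (fun n => V1 (fs n)) p p1' w10 A1f
     (fun n => (pieces _ (Dfs n)).1)
     (fun xy => cvgB (cvf xy.1) (cvf xy.2)) e' e'0.
  have H2 := @key R X c f fs p p1' c0 A2f
     (fun n => (pieces _ (Dfs n)).2) cvf e' e'0.
  have H3 : \forall n \near \oo, (energy b c p (fs n) < (ee + e')%:E)%E.
    have : (limn_esup (fun n => energy b c p (fs n)) < (ee + e')%:E)%E.
      apply: le_lt_trans hsup _; rewrite Efin // lte_fin ltrDl //.
    rewrite /limn_esup /limf_esup => /ereal_inf_lt [y [V hV <-]] hy.
    apply: filterS hV => n Vn; apply: le_lt_trans hy.
    by apply: ereal_sup_ubound; exists n.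
  near=> n.
  have [d1fin d1le] : (Sw w1 (fun t => (V1 (fs n) t - V1 f t)%R) p < +oo)%E /\
     fine (Sw w1 (fun t => (V1 (fs n) t - V1 f t)%R) p) <=
      K * (fine (Sw w1 (V1 (fs n)) p) - fine (Sw w1 (V1 f) p)) + e'.
    by near: n; exact: H1.
  have [d2fin d2le] : (Sw c (fun t => (fs n t - f t)%R) p < +oo)%E /\
     fine (Sw c (fun t => (fs n t - f t)%R) p) <=
      K * (fine (Sw c (fs n) p) - fine (Sw c f p)) + e'.
    by near: n; exact: H2.
  have h3 : (energy b c p (fs n) < (ee + e')%:E)%E by near: n; exact: H3.
  have e1 : Sw w1 (V1 (fs n - f)) p =
      Sw w1 (fun t => (V1 (fs n) t - V1 f t)%R) p.
    apply: eq_esum => xy _; congr (EFin (_ * (`| _ | `^ _))).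
    rewrite /V1 /=.
    change (fs n xy.1 - f xy.1 - (fs n xy.2 - f xy.2) = fs n xy.1 - fs n xy.2 - (f xy.1 - f xy.2)); ring.
  have e2 : Sw c (fs n - f) p = Sw c (fun t => (fs n t - f t)%R) p.
    reflexivity.
  have Dd : Dp b c p (fs n - f).
    rewrite /Dp eE e1 e2 (ge0_fin _ (Sw_ge0 _ _ _ w10) d1fin).
    by rewrite (ge0_fin _ (Sw_ge0 _ _ _ c0) d2fin) /= -EFinD -EFinM ltry.
  rewrite (Efin _ (Dfs n)) in h3; rewrite (Efin _ Dd).
  rewrite lte_fin in h3.
  exists (2^-1 * (fine (Sw w1 (V1 (fs n - f)) p) + fine (Sw c (fs n - f) p))).
  split => //.
  have g1 : 0 <= fine (Sw w1 (V1 (fs n - f)) p) by apply: fine_ge0; exact: Sw_ge0.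
  have g2 : 0 <= fine (Sw c (fs n - f) p) by apply: fine_ge0; exact: Sw_ge0.
  rewrite e1 e2 in g1 g2 *.
  split; first by rewrite mulr_ge0 // addr_ge0.
  have hK : K * (2^-1 * (fine (Sw w1 (V1 (fs n)) p) + fine (Sw c (fs n) p)) - ee)
     <= K * e'.
    by apply: ler_wpM2l => //; lra.
  rewrite /ee in hK.
  lra.
apply/fine_cvgP; split.
  have := claim 1 ltr01.
  apply: filterS => n [x [Ex _]].
  by rewrite /norm_op Ex -EFinD poweR_EFin.
apply/cvgrPdist_lt => eps eps0.
pose eta := eps `^ p.
have eta0 : 0 < eta by rewrite powR_gt0.
have eta20 : 0 < eta / 2 by rewrite divr_gt0.
pose dl := (eta / 2) `^ p^-1.
have dl0 : 0 < dl by rewrite powR_gt0.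
have Hc := claim (eta / 2) eta20.
move/cvgrPdist_lt : (cvf o) => /(_ _ dl0) Ho.
apply: filterS2 Hc Ho => n [x [Ex [x0 xlt]]] hn.
rewrite /= /norm_op Ex -EFinD poweR_EFin /= sub0r normrN ger0_norm ?powR_ge0 //.
have ho : `|(fs n - f) o| `^ p < eta / 2.
  have -> : eta / 2 = dl `^ p.
    by rewrite /dl -powRrM mulVf ?gt_eqF // powRr1 // ltW.
  apply: (gt0_ltr_powR p0); rewrite ?nnegrE ?normr_ge0 ?(ltW dl0) //.
  change (`|fs n o - f o| < dl); by rewrite distrC.
have -> : eps = eta `^ p^-1.
  by rewrite /eta -powRrM mulfV ?gt_eqF // powRr1 // ltW.
apply: gt0_ltr_powR; rewrite ?invr_gt0 ?nnegrE ?addr_ge0 ?powR_ge0 ?(ltW eta0) //.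
lra.
Unshelve. all: by end_near.
Qed.
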